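(* Suppose $a\in C^2(\mathbb{R})$. Let $\tilde\alpha\in\mathbb{R}^2$ be such that $a'(\tilde\alpha_2)>0$. Given $s_0,t_0>0$ sufficiently small depending on the function $a$ and $\tilde\alpha_2$, the matrix $A$ is invertible. Moreover, for any $0<\epsilon<1$, the unique solution $\gamma_0^{\epsilon}$ of the system \begin{equation*} L^{\epsilon}(\gamma) = 0 \end{equation*} is non-negative componentwise. Further, there exist constants $0<\lambda<\Lambda<\infty$ depending on the function $a$, $\tilde\alpha_2$, $s_0$ and $t_0$ such that \begin{equation*} \lambda\epsilon \leq[\gamma_0^{\epsilon}]_i \leq \Lambda\epsilon \ \text{ for }\ i=1,2,3,4. \end{equation*}
   Context: Let $a:\mathbb{R}\to\mathbb{R}$, $F(\xi)=\int_0^\xi a(s)\,ds$, and for $\alpha\in\mathbb{R}^2$ let $$P_1^{\alpha}(u,v):=\begin{pmatrix} u-\alpha_1 & v-\alpha_2 \\ a(v)-a(\alpha_2) & u-\alpha_1\\ (u-\alpha_1)(a(v)-a(\alpha_2)) & \frac{(u-\alpha_1)^2}{2}+F(v)-F(\alpha_2)-a(\alpha_2)(v-\alpha_2) \end{pmatrix}.$$ Given $s_0,t_0>0$ set $\zeta_1:=P_1^{\tilde\alpha}(\tilde\alpha_1+s_0,\tilde\alpha_2)$, $\zeta_2:=P_1^{\tilde\alpha}(\tilde\alpha_1-s_0,\tilde\alpha_2)$, $\zeta_3:=P_1^{\tilde\alpha}(\tilde\alpha_1,\tilde\alpha_2+t_0)$, $\zeta_4:=P_1^{\tilde\alpha}(\tilde\alpha_1,\tilde\alpha_2-t_0)$.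 Let $D_1,D_2,D_3$ denote the $(1,2)$, $(2,3)$, $(1,3)$ row-minors of a $3\times 2$ matrix, respectively. Let $A\in M^{4\times 4}$ be the matrix whose $j$-th column is $(D_1(\zeta_j),D_2(\zeta_j),D_3(\zeta_j),1)^T$ for $j=1,2,3,4$, and for $\epsilon>0$, $\gamma\in\mathbb{R}^4$ define $L^{\epsilon}(\gamma):=A\gamma-(0,0,0,\epsilon)^T$. *)

(* Defs.v *)
From Stdlib Require Import Reals.
From Coquelicot Require Import Coquelicot.
From mathcomp Require Import all_boot all_algebra.
From mathcomp Require Import Rstruct.

Set Implicit Arguments.
Unset Strict Implicit.
Unset Printing Implicit Defensive.

Import GRing.Theory.
Local Open Scope ring_scope.

Definition C2 (a : R -> R) : Prop :=
  exists a' a'' : R -> R,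
    (forall x, is_derive a x (a' x)) /\
    (forall x, is_derive a' x (a'' x)) /\
    (forall x, continuous a'' x).

Definition Fint (a : R -> R) (xi : R) : R := RInt a 0%R xi.

Definition P1 (a : R -> R) (al1 al2 u v : R) : 'M[R]_(3,2) :=
  \matrix_(i < 3, j < 2)
    match nat_of_ord i, nat_of_ord j with
    | 0, 0 => u - al1
    | 0, _ => v - al2
    | 1, 0 => a v - a al2
    | 1, _ => u - al1
    | _, 0 => (u - al1) * (a v - a al2)
    | _, _ => (u - al1) ^+ 2 / 2%:R + Fint a v - Fint a al2 - a al2 * (v - al2)
    end.

Definition minor2 (M : 'M[R]_(3,2)) (r1 r2 : 'I_3) : R :=
  M r1 0 * M r2 1 - M r1 1 * M r2 0.

Definition D1 (M : 'M[R]_(3,2)) : R := minor2 M 0 1.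
Definition D2 (M : 'M[R]_(3,2)) : R := minor2 M 1 (inord 2).
Definition D3 (M : 'M[R]_(3,2)) : R := minor2 M 0 (inord 2).

(* zeta_1..zeta_4 (indexed 0..3) *)
Definition zeta (a : R -> R) (al1 al2 s0 t0 : R) (j : 'I_4) : 'M[R]_(3,2) :=
  match nat_of_ord j with
  | 0 => P1 a al1 al2 (al1 + s0) al2
  | 1 => P1 a al1 al2 (al1 - s0) al2
  | 2 => P1 a al1 al2 al1 (al2 + t0)
  | _ => P1 a al1 al2 al1 (al2 - t0)
  end.

Definition Amat (a : R -> R) (al1 al2 s0 t0 : R) : 'M[R]_4 :=
  \matrix_(i < 4, j < 4)
    let Z := zeta a al1 al2 s0 t0 j in
    match nat_of_ord i with
    | 0 => D1 Z
    | 1 => D2 Z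
    | 2 => D3 Z
    | _ => 1
    end.

Definition epsvec (eps : R) : 'cV[R]_4 :=
  \col_(i < 4) (if nat_of_ord i == 3%N then eps else 0).

Definition Leps (a : R -> R) (al1 al2 s0 t0 eps : R) (g : 'cV[R]_4) : 'cV[R]_4 :=
  Amat a al1 al2 s0 t0 *m g - epsvec eps.

(* Main.v *)
Require Import Defs.
From Stdlib Require Import Reals Lra.
From Coquelicot Require Import Coquelicot.
From mathcomp Require Import all_boot all_order all_algebra.
From mathcomp Require Import Rstruct ring lra.
Import Order.TTheory GRing.Theory Num.Theory.
Local Open Scope ring_scope.

Local Open Scope R_scope.
Lemma key (a : R -> R) b : C2 a -> 0 < Derive a b -> exists d, 0 < d /\
  forall t, 0 < t < d ->
   a (b + t) - a b > 0 /\ a (b - t) - a b < 0 /\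
   Fint a (b + t) - Fint a b - a b * t > 0 /\
   Fint a (b - t) - Fint a b + a b * t > 0.
Proof.
intros [a' [a'' [Ha [Ha' _]]]] Hp.
rewrite (is_derive_unique _ _ _ (Ha b)) in Hp.
assert (Hc : continuous a' b) by (apply (ex_derive_continuous (K:=R_AbsRing) (V:=R_NormedModule)); eexists; apply Ha').
assert (Hca : forall x, continuous a x) by (intro x; apply (ex_derive_continuous (K:=R_AbsRing) (V:=R_NormedModule)); eexists; apply Ha).
destruct (proj1 (filterlim_locally _ _) Hc (mkposreal _ (Fourier_util.Rlt_mult_inv_pos _ _ Hp Rlt_R0_R2 ))) as [d Hd].
assert (Hpos : forall x, Rabs (x - b) < d -> a' x > 0).
{ intros x Hx. specialize (Hd x Hx). simpl in Hd.
  change (Rabs (a' x - a' b) < a' b / 2) in Hd.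
  apply Rabs_def2 in Hd. Lra.lra. }
assert (HF : forall x, is_derive (Fint a) x (a x)).
{ intro x. apply (is_derive_RInt a (Fint a) 0 x); [|apply Hca].
  apply filter_forall. intro y. apply (RInt_correct (V:=R_CompleteNormedModule)). apply (ex_RInt_continuous (V:=R_CompleteNormedModule)).
  intros; apply Hca. }
assert (Hal : forall t, 0 < t < d -> a (b + t) - a b > 0 /\ a (b - t) - a b < 0).
{ intros t Ht. split.
  - destruct (MVT_cor2 a a' b (b+t)) as [c [Hc1 Hc2]]. Lra.lra.
    intros; apply is_derive_Reals, Ha.
    rewrite Hc1. assert (a' c > 0) by (apply Hpos; rewrite Rabs_right; Lra.lra). Lra.nra.
  - destruct (MVT_cor2 a a' (b - t) b) as [c [Hc1 Hc2]]. Lra.lra.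
    intros; apply is_derive_Reals, Ha.
    assert (a' c > 0) by (apply Hpos; rewrite Rabs_left; Lra.lra). Lra.nra. }
exists d. split. apply cond_pos. intros t Ht.
destruct (Hal t Ht) as [H1 H2]. repeat split; auto.
- destruct (MVT_cor2 (fun u => Fint a (b + u) - Fint a b - a b * u)
     (fun u => a (b + u) - a b) 0 t) as [c [Hc1 Hc2]]. Lra.lra.
  intros c _. apply is_derive_Reals.
  auto_derive.
  eexists; apply HF.
  replace (Derive (fun x => Fint a x) (b+c)) with (a (b+c)) by (symmetry; apply is_derive_unique, HF). Lra.lra.
  rewrite Rplus_0_r Rmult_0_r in Hc1.
  destruct (Hal c) as [H3 _]. Lra.lra. Lra.nra.
- destruct (MVT_cor2 (fun u => Fint a (b - u) - Fint a b + a b * u)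
     (fun u => - (a (b - u) - a b)) 0 t) as [c [Hc1 Hc2]]. Lra.lra.
  intros c _. apply is_derive_Reals.
  auto_derive.
  eexists; apply HF.
  replace (Derive (fun x => Fint a x) (b + - c)) with (a (b-c)) by (symmetry; apply is_derive_unique, HF). Lra.lra.
  rewrite Rminus_0_r Rmult_0_r in Hc1.
  destruct (Hal c) as [_ H3]. Lra.lra. Lra.nra.
Qed.

Local Open Scope ring_scope.
Section S.
Variables (a : R -> R) (al1 al2 s t : R).
Let al := a (al2 + t) - a al2.
Let be := a (al2 - t) - a al2.
Let G := Fint a (al2 + t) - Fint a al2 - a al2 * t.
Let H := Fint a (al2 - t) - Fint a al2 + a al2 * t.
Definition Aexp (i j : nat) : R :=
  match i, j with
  | 0, 0 => s^+2 | 0, 1 => s^+2 | 0, 2 => - (t * al) | 0, _ => t * be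
  | 1, 0 => 0 | 1, 1 => 0 | 1, 2 => al * G | 1, _ => be * H
  | 2, 0 => s^+3 / 2%:R | 2, 1 => - (s^+3 / 2%:R) | 2, _ => 0
  | _, _ => 1 end.
Lemma Aval i j : (i < 4)%N -> (j < 4)%N ->
  Amat a al1 al2 s t (inord i) (inord j) = Aexp i j.
Proof.
move: i j => [|[|[|[|i]]]] [|[|[|[|j]]]] //= _ _;
rewrite /Amat mxE !inordK //= /zeta inordK //= /D1 /D2 /D3 /minor2 /P1 !mxE ?inordK //=;
rewrite /Aexp /al /be /G /H ?RplusE ?RminusE ?RmultE ?RoppE ?RdivE ?RinvE ?R0E ?R1E; try ring.
Qed.
End S.

Lemma sum4 (F : 'I_4 -> R) :
  \sum_(j < 4) F j = F (inord 0) + F (inord 1) + F (inord 2) + F (inord 3).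
Proof.
rewrite !big_ord_recl big_ord0 addr0 !addrA.
by congr (_ + _ + _ + _); congr F; apply: val_inj; rewrite /= inordK.
Qed.

Lemma ord4P (P : 'I_4 -> Prop) :
  P (inord 0) -> P (inord 1) -> P (inord 2) -> P (inord 3) -> forall i, P i.
Proof.
move=> p0 p1 p2 p3 [[|[|[|[|m]]]] Hm] //.
- by have -> : Ordinal Hm = inord 0 by apply: val_inj; rewrite /= inordK.
- by have -> : Ordinal Hm = inord 1 by apply: val_inj; rewrite /= inordK.
- by have -> : Ordinal Hm = inord 2 by apply: val_inj; rewrite /= inordK.
- by have -> : Ordinal Hm = inord 3 by apply: val_inj; rewrite /= inordK.
Qed.

Lemma inv_alg (s t al be G H v0 v1 v2 v3 : R) :
  0 < s -> 0 < t -> 0 < al -> be < 0 -> 0 < G -> 0 < H ->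
  v0 * s^+2 + v1 * 0 + v2 * (s^+3 / 2%:R) + v3 * 1 = 0 ->
  v0 * s^+2 + v1 * 0 + v2 * (- (s^+3 / 2%:R)) + v3 * 1 = 0 ->
  v0 * (- (t * al)) + v1 * (al * G) + v2 * 0 + v3 * 1 = 0 ->
  v0 * (t * be) + v1 * (be * H) + v2 * 0 + v3 * 1 = 0 ->
  [/\ v0 = 0, v1 = 0, v2 = 0 & v3 = 0].
Proof.
move=> hs ht hal hbe hG hH e0 e1 e2 e3.
have hv2 : v2 = 0.
  have : v2 * s ^+ 3 = 0 by lra.
  by move/eqP; rewrite mulf_eq0 expf_eq0 /= (gt_eqF hs) orbF => /eqP.
have hv3 : v3 = - (v0 * s^+2) by lra.
have hc4 : al * G != 0 by rewrite mulf_neq0 // gt_eqF.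
have hv1 : v1 * (al * G) = v0 * (t * al + s^+2) by rewrite hv3 in e2; lra.
have hB : v0 * (t * be * (al * G) + be * H * (t * al + s^+2) - s^+2 * (al * G)) = 0.
  have -> : v0 * (t * be * (al * G) + be * H * (t * al + s^+2) - s^+2 * (al * G))
     = (v0 * (t * be) + v1 * (be * H) - v0 * s^+2) * (al * G).
    transitivity (v0 * (t * be) * (al * G) + be * H * (v1 * (al * G)) - v0 * s^+2 * (al * G)).
      by rewrite hv1; ring.
    by ring.
  rewrite hv3 in e3. have -> : v0 * (t * be) + v1 * (be * H) - v0 * s ^+ 2 = 0 by lra.
  by rewrite mul0r.
have hv0 : v0 = 0.
  move/eqP: hB; rewrite mulf_eq0 => /orP [/eqP //|/eqP hB].
  have p1 : 0 < al * G by rewrite mulr_gt0.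
  have p2 : 0 < t * al + s^+2 by rewrite addr_gt0 ?mulr_gt0 ?exprn_gt0.
  have p3 : be * H < 0 by rewrite nmulr_rlt0.
  have p4 : t * be < 0 by rewrite pmulr_rlt0.
  have q1 : t * be * (al * G) < 0 by rewrite nmulr_rlt0.
  have q2 : be * H * (t * al + s^+2) < 0 by rewrite nmulr_rlt0.
  have q3 : 0 < s^+2 * (al * G) by rewrite mulr_gt0 ?exprn_gt0.
  have : t * be * (al * G) + be * H * (t * al + s^+2) - s^+2 * (al * G) < 0 by lra.
  by rewrite hB ltxx.
have : v1 * (al * G) = 0 by rewrite hv1 hv0 mul0r.
move/eqP; rewrite mulf_eq0 (negbTE hc4) orbF => /eqP hv1'.
by split => //; rewrite hv3 hv0 mul0r oppr0.
Qed.

Definition wv (s t al be G H : R) := t * (- (al * be)) * (G + H) / (2%:R * s^+2).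
Definition Nv (s t al be G H : R) := 2%:R * wv s t al be G H + - (be * H) + al * G.

Lemma solE (x y N : R) : N != 0 -> x * N = y -> x = y / N.
Proof. by move=> hN <-; rewrite mulfK. Qed.

Lemma sol_alg (s t al be G H e g0 g1 g2 g3 : R) :
  0 < s -> 0 < t -> 0 < al -> be < 0 -> 0 < G -> 0 < H ->
  s^+2 * g0 + s^+2 * g1 + - (t * al) * g2 + t * be * g3 = 0 ->
  0 * g0 + 0 * g1 + al * G * g2 + be * H * g3 = 0 ->
  s^+3 / 2%:R * g0 + - (s^+3 / 2%:R) * g1 + 0 * g2 + 0 * g3 = 0 ->
  1 * g0 + 1 * g1 + 1 * g2 + 1 * g3 = e ->
  let w := wv s t al be G H in let N := Nv s t al be G H in
  [/\ g0 = e * w / N, g1 = e * w / N, g2 = e * (- (be * H)) / N & g3 = e * (al * G) / N].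
Proof.
move=> hs ht hal hbe hG hH e0 e1 e2 e3 w N.
have hs2 : s^+2 != 0 by rewrite expf_neq0 // gt_eqF.
have h2 : (2%:R : R) != 0 by rewrite pnatr_eq0.
have hc4p : 0 < al * G by rewrite mulr_gt0.
have hc4 : al * G != 0 by rewrite gt_eqF.
have hwp : 0 < w.
  rewrite /w /wv divr_gt0 ?mulr_gt0 ?addr_gt0 ?oppr_gt0 ?pmulr_rlt0 ?exprn_gt0 //.
have hc3p : 0 < - (be * H) by rewrite oppr_gt0 nmulr_rlt0.
have hNp : 0 < N.
  rewrite /N /Nv -/w addr_gt0 ?mulr_gt0 ?addr_gt0 ?ltr0n //.
  by rewrite mulr_gt0 // ltr0n.
have hN : N != 0 by rewrite (gt_eqF hNp).
have hg1 : g1 = g0.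
  have : (g0 - g1) * (s^+3 / 2%:R) = 0 by lra.
  move/eqP; rewrite mulf_eq0 mulf_eq0 invr_eq0 expf_eq0 /= (gt_eqF hs) (negbTE h2) /=.
  by rewrite orbF subr_eq0 => /eqP.
have key2 : g2 * (al * G) = - (be * H) * g3 by lra.
have hg0 : g0 = t * (al * g2 - be * g3) / (2%:R * s^+2).
  apply: solE; first by rewrite mulf_neq0.
  rewrite hg1 in e0; lra.
have key1 : w * g3 = g0 * (al * G).
  rewrite hg0 /w /wv.
  transitivity (t * (al * (g2 * (al * G)) - be * g3 * (al * G)) / (2%:R * s ^+ 2)); last by ring.
  by rewrite key2; ring.
have k3 : g3 * N = e * (al * G).
  rewrite /N /Nv -/w -e3 hg1; lra.
have k2 : g2 * N * (al * G) = e * (- (be * H)) * (al * G).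
  transitivity ((g2 * (al * G)) * N); first by ring.
  rewrite key2; transitivity (- (be * H) * (g3 * N)); first by ring.
  by rewrite k3; ring.
have k0 : g0 * N * (al * G) = e * w * (al * G).
  transitivity ((g0 * (al * G)) * N); first by ring.
  rewrite -key1; transitivity (w * (g3 * N)); first by ring.
  by rewrite k3; ring.
have hg0' : g0 = e * w / N by apply: solE => //; apply: (mulIf hc4).
split => //.
- by rewrite hg1.
- by apply: solE => //; apply: (mulIf hc4).
- by apply: solE.
Qed.

Lemma bnd (m num N e : R) : 0 < m -> m <= num -> num <= N -> 0 < e ->
  0 <= e * num / N /\ m / N * e <= e * num / N <= 2%:R * e.
Proof.
move=> hm hmn hnN he.
have hN : 0 < N by apply: (lt_le_trans hm); apply: le_trans hnN.
have h1 : m / N <= num / N by rewrite ler_pM2r ?invr_gt0.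
have h2 : num / N <= 1 by rewrite ler_pdivrMr // mul1r.
have h0 : 0 <= num / N by rewrite divr_ge0 // ltW // (lt_le_trans hm).
have -> : e * num / N = num / N * e by ring.
split; first by rewrite mulr_ge0 // ltW.
apply/andP; split; first by rewrite ler_wpM2r // ltW.
have : num / N * e <= 1 * e by rewrite ler_wpM2r // ltW.
rewrite mul1r => h; apply: (le_trans h); lra.
Qed.

Theorem lemma16 (a : R -> R) (ha : C2 a) (al2 : R) (hpos : 0 < Derive a al2) :
  exists delta : R, 0 < delta /\
  forall s0 t0 : R, 0 < s0 -> s0 < delta -> 0 < t0 -> t0 < delta ->
  exists lam Lam : R, 0 < lam /\ lam < Lam /\
  forall al1 : R,
    Amat a al1 al2 s0 t0 \in unitmx /\
    forall eps : R, 0 < eps -> eps < 1 ->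
    forall g : 'cV[R]_4, Leps a al1 al2 s0 t0 eps g = 0 ->
      (forall i : 'I_4, 0 <= g i 0) /\
      (forall i : 'I_4, lam * eps <= g i 0 <= Lam * eps).
Proof.
have hp : Rlt 0 (Derive a al2) by apply/RltP.
have [d [hd Hd]] := key a al2 ha hp.
exists d; split; first exact/RltP.
move=> s t hs hsd ht htd.
have htR : Rlt 0 t /\ Rlt t d by split; apply/RltP.
have [hal [hbe [hG hH]]] := Hd t htR.
move/RltP: hal => hal. move/RltP: hbe => hbe. move/RltP: hG => hG. move/RltP: hH => hH.
have hal' : 0 < a (al2 + t) - a al2 := hal.
have hbe' : a (al2 - t) - a al2 < 0 := hbe.
have hG' : 0 < Fint a (al2 + t) - Fint a al2 - a al2 * t := hG.
have hH' : 0 < Fint a (al2 - t) - Fint a al2 + a al2 * t := hH.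
clear hal hbe hG hH.
move: hal' hbe' hG' hH'.
set al := a (al2 + t) - a al2.
set be := a (al2 - t) - a al2.
set G := Fint a (al2 + t) - Fint a al2 - a al2 * t.
set H := Fint a (al2 - t) - Fint a al2 + a al2 * t.
move=> hal hbe hG hH.
pose w := wv s t al be G H.
pose N := Nv s t al be G H.
have hc3p : 0 < - (be * H) by rewrite oppr_gt0 nmulr_rlt0.
have hc4p : 0 < al * G by rewrite mulr_gt0.
have hwp : 0 < w.
  rewrite /w /wv; apply: divr_gt0.
    apply: mulr_gt0; last by apply: addr_gt0.
    by apply: mulr_gt0 => //; rewrite oppr_gt0 pmulr_rlt0.
  apply: mulr_gt0; [lra | exact: exprn_gt0].
have hNp : 0 < N.
  rewrite /N /Nv; apply: addr_gt0 => //; apply: addr_gt0 => //.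
  have h2 : (0:R) < 2%:R by exact: ltr0Sn.
  by apply: mulr_gt0.
pose m := Num.min w (Num.min (- (be * H)) (al * G)).
have hm : 0 < m by rewrite /m !lt_min hwp hc3p hc4p.
have hmw : m <= w by rewrite /m ge_min lexx.
have hm3 : m <= - (be * H) by rewrite /m !ge_min lexx orbT.
have hm4 : m <= al * G by rewrite /m !ge_min lexx !orbT.
have hwN : w <= N by rewrite /N /Nv -/w; lra.
have h3N : - (be * H) <= N by rewrite /N /Nv -/w; lra.
have h4N : al * G <= N by rewrite /N /Nv -/w; lra.
apply: (ex_intro _ (m / N)); apply: (ex_intro _ 2%:R).
split; first by rewrite divr_gt0.
split.
  rewrite ltr_pdivrMr //.
  have : m < 2%:R * N by lra.
  done.
move=> al1; split.
  rewrite unitmxE unitfE; apply/negP => /det0P [v vn0 vA].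
  have E j : (j < 4)%N -> \sum_(i < 4) v 0 i * Amat a al1 al2 s t i (inord j) = 0.
    by move=> hj; have := congr1 (fun M : 'rV[R]_4 => M 0 (inord j)) vA; rewrite !mxE.
  have := E 0%N isT; rewrite sum4 !Aval //; cbn [Aexp] => e0.
  have := E 1%N isT; rewrite sum4 !Aval //; cbn [Aexp] => e1.
  have := E 2%N isT; rewrite sum4 !Aval //; cbn [Aexp] => e2.
  have := E 3%N isT; rewrite sum4 !Aval //; cbn [Aexp] => e3.
  have [v0 v1 v2 v3] := @inv_alg s t al be G H _ _ _ _ hs ht hal hbe hG hH e0 e1 e2 e3.
  move/negP: vn0; apply; apply/eqP/rowP; apply: ord4P; rewrite mxE //.
move=> e he he1 g hL.
move/eqP: hL; rewrite /Leps subr_eq0 => /eqP hA.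
have E i : (i < 4)%N -> \sum_(j < 4) Amat a al1 al2 s t (inord i) j * g j 0 = epsvec e (inord i) 0.
  by move=> hi; have := congr1 (fun M : 'cV[R]_4 => M (inord i) 0) hA; rewrite !mxE.
have := E 0%N isT; rewrite sum4 !Aval // /epsvec mxE inordK //; cbn [Aexp] => e0.
have := E 1%N isT; rewrite sum4 !Aval // /epsvec mxE inordK //; cbn [Aexp] => e1.
have := E 2%N isT; rewrite sum4 !Aval // /epsvec mxE inordK //; cbn [Aexp] => e2.
have := E 3%N isT; rewrite sum4 !Aval // /epsvec mxE inordK //; cbn [Aexp] => e3.
have [s0 s1 s2 s3] := @sol_alg s t al be G H e _ _ _ _ hs ht hal hbe hG hH e0 e1 e2 e3.
have B0 := @bnd m w N e hm hmw hwN he.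
have B3 := @bnd m _ N e hm hm3 h3N he.
have B4 := @bnd m _ N e hm hm4 h4N he.
split; apply: ord4P.
- by rewrite s0; exact: B0.1.
- by rewrite s1; exact: B0.1.
- by rewrite s2; exact: B3.1.
- by rewrite s3; exact: B4.1.
- by rewrite s0; exact: B0.2.
- by rewrite s1; exact: B0.2.
- by rewrite s2; exact: B3.2.
- by rewrite s3; exact: B4.2.
Qed.
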